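(* Let $(L,\preceq)$ be a lattice with meet $\wedge$ and join $\vee$, and let $\delta$ be an equivalence relation on $L$. Then $\delta$ is a local congruence on $L$ if and only if, for all $a,b,c\in L$: whenever $(a,b)\in\delta$ and $a\wedge b\preceq c\preceq a\vee b$, we have $(a\vee c,\,b\vee c)\in\delta$ and $(a\wedge c,\,b\wedge c)\in\delta$.
   Context: Given a lattice $(L,\preceq)$, an equivalence relation $\delta$ on $L$ is called a local congruence if (i) each equivalence class of $\delta$ is a sublattice of $L$ (closed under $\wedge$ and $\vee$ of $L$), and (ii) each equivalence class of $\delta$ is convex (if $x,y$ belong to the class and $x\preceq z\preceq y$ with $z\in L$, then $z$ belongs to the class). *)

(* Defs.v *)
From mathcomp Require Import all_boot all_order.
Set Implicit Arguments. Unset Strict Implicit. Unset Printing Implicit Defensive.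
Import Order.Theory.
Local Open Scope order_scope.

Definition is_equivalence (T : Type) (delta : T -> T -> Prop) : Prop :=
  [/\ (forall x, delta x x),
      (forall x y, delta x y -> delta y x) &
      (forall x y z, delta x y -> delta y z -> delta x z)].

Definition eq_class (T : Type) (delta : T -> T -> Prop) (x : T) : T -> Prop :=
  fun y => delta x y.

Definition is_sublattice d (L : latticeType d) (S : L -> Prop) : Prop :=
  forall x y, S x -> S y -> S (x `&` y) /\ S (x `|` y).

Definition is_convex d (L : latticeType d) (S : L -> Prop) : Prop :=
  forall x y z, S x -> S y -> x <= z -> z <= y -> S z.

Definition local_congruence d (L : latticeType d) (delta : L -> L -> Prop) : Prop :=
  is_equivalence delta /\
  (forall x : L, is_sublattice (eq_class delta x) /\ is_convex (eq_class delta x)).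

(* Main.v *)
Require Import Defs.
From mathcomp Require Import all_boot all_order.
Import Order.Theory.
Local Open Scope order_scope.

Theorem proposition3p5 (d : Order.disp_t) (L : latticeType d)
    (delta : L -> L -> Prop) :
  is_equivalence delta ->
  (local_congruence delta <->
   (forall a b c : L, delta a b -> a `&` b <= c <= a `|` b ->
      delta (a `|` c) (b `|` c) /\ delta (a `&` c) (b `&` c))).
Proof.
move=> [Hr Hs Ht]; split.
- move=> [_ H] a b c Hab /andP[H1 H2].
  have [Hsub Hconv] := H a.
  have Ha : eq_class delta a a by exact: Hr.
  have Hb : eq_class delta a b by exact: Hab.
  have [Hm Hj] := Hsub a b Ha Hb.
  have Hc : eq_class delta a c by exact: (Hconv _ _ _ Hm Hj H1 H2).
  have [Hm1 Hj1] := Hsub a c Ha Hc.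
  have [Hm2 Hj2] := Hsub b c Hb Hc.
  split; [exact: (Ht _ _ _ (Hs _ _ Hj1) Hj2) | exact: (Ht _ _ _ (Hs _ _ Hm1) Hm2)].
- move=> H.
  have Hj : forall a b, delta a b -> delta a (a `|` b).
    move=> a b Hab; have := H a b a Hab; rewrite leIl leUl => /(_ isT) [+ _].
    by rewrite joinxx joinC.
  have Hm : forall a b, delta a b -> delta a (a `&` b).
    move=> a b Hab; have := H a b a Hab; rewrite leIl leUl => /(_ isT) [_ +].
    by rewrite meetxx meetC.
  split; first by split.
  move=> w; split.
  + move=> x y Hx Hy; rewrite /eq_class in Hx Hy *.
    have Hxy : delta x y := Ht _ _ _ (Hs _ _ Hx) Hy.
    split; apply: Ht Hx _; [exact: Hm | exact: Hj].
  + move=> x y z Hx Hy Hxz Hzy; rewrite /eq_class in Hx Hy *.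
    have Hxy : delta x y := Ht _ _ _ (Hs _ _ Hx) Hy.
    have Hle : x <= y := le_trans Hxz Hzy.
    have := H x y z Hxy; rewrite (meet_l Hle) (join_r Hle) Hxz Hzy => /(_ isT) [+ _].
    rewrite (join_r Hxz) (join_l Hzy) => Hzy'.
    exact: Ht Hy (Hs _ _ Hzy').
Qed.
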